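(* Let $\mathbf{G}$ be a linear operator on $\mathbb{R}^{n_1\times\cdots\times n_d}$ and consider the explicit $s$-step linear multistep method $\mathbf{u}^{k+s}+\sum_{j=0}^{s-1}a_j\mathbf{u}^{k+j}=\Delta t\sum_{j=0}^{s-1}b_j\mathbf{G}\mathbf{u}^{k+j}$, written as the one-step recurrence $\mathbf{v}^{k+1}=\mathbf{L}_{\Delta t}\mathbf{v}^{k}$ with $\mathbf{v}^{k+1}=(\mathbf{u}^{k+s},\mathbf{u}^{k+s-1},\dots,\mathbf{u}^{k+1})$ and $$\mathbf{L}_{\Delta t}=\begin{bmatrix} b_{s-1}\Delta t\mathbf{G}-a_{s-1}\mathbf{I} & \cdots & b_1\Delta t\mathbf{G}-a_1\mathbf{I} & b_0\Delta t\mathbf{G}-a_0\mathbf{I}\\ \mathbf{I}&\cdots&\mathbf{0}&\mathbf{0}\\ \vdots&\ddots&\vdots&\vdots\\ \mathbf{0}&\cdots&\mathbf{I}&\mathbf{0}\end{bmatrix}.$$ Suppose this linear scheme is Lax-stable, i.e. there is a constant $K$ with $\|\mathbf{L}_{\Delta t}\|_2\le 1+K\Delta t$. Then the rank-truncated scheme $\mathbf{v}^{k+1}=\mathfrak{T}_r(\mathbf{L}_{\Delta t}\mathbf{v}^{k})$ is stable: for every $T>0$ there is a constant $C_T$ (one may take $C_T=e^{KT}$) such that $\|\mathbf{v}^{k}\|_2\le C_T\|\mathbf{v}^{0}\|_2$ for all $k$ with $k\Delta t\le T$.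
   Context: $\|\cdot\|_2$ on tensors (and on block vectors of tensors) is the Euclidean norm of all entries, and $\|\mathbf{L}_{\Delta t}\|_2$ is the induced operator norm. $\mathfrak{T}_r$ is the hierarchical (HOSVD-based) rank-$r$ truncation operator with respect to a fixed dimension tree $\mathcal{T}_d$ and target ranks $r=(r_t)$, applied to each tensor block of the block vector. For a single tensor, $\mathfrak{T}_r(\mathbf{x})=\prod_{t\in\mathcal{T}_d^{p}}\mathbf{P}_t\cdots\prod_{t\in\mathcal{T}_d^{1}}\mathbf{P}_t\,\mathbf{x}$, where $\mathcal{T}_d^l$ is the set of tree nodes at distance $l$ from the root, $p$ is the tree depth, and each $\mathbf{P}_t$ (depending on $\mathbf{x}$) is the orthogonal projection acting on the $t$-mode matricization $\mathbf{x}^{(t)}$ (rows indexed by the modes in $t$) onto the span of its leading $r_t$ left singular vectors. *)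

(* Defs.v *)
From HB Require Import structures.
From mathcomp Require Import all_boot all_order all_algebra.
From mathcomp Require Import reals.
Set Implicit Arguments. Unset Strict Implicit. Unset Printing Implicit Defensive.
Import Order.TTheory GRing.Theory Num.Theory.
Local Open Scope ring_scope.

(* A binary dimension tree: leaves are single modes, internal nodes have two
   children; a node t is identified with the set of modes (leaves) below it. *)
Inductive dtree (d : nat) : Type :=
| DLeaf of 'I_d
| DNode of dtree d & dtree d.
Arguments DLeaf {d}.
Arguments DNode {d}.

Section DimTree.
Variable d : nat.

Fixpoint dt_leaves (T : dtree d) : seq 'I_d :=
  match T with
  | DLeaf i => [:: i]
  | DNode l r => dt_leaves l ++ dt_leaves r
  end.

Definition dt_modes (T : dtree d) : {set 'I_d} := [set i in dt_leaves T].

Definition dimension_tree (T : dtree d) : Prop :=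
  perm_eq (dt_leaves T) (enum 'I_d).

Fixpoint dt_depth (T : dtree d) : nat :=
  match T with
  | DLeaf _ => 0
  | DNode l r => (maxn (dt_depth l) (dt_depth r)).+1
  end.

Fixpoint dt_level (T : dtree d) (l : nat) : seq {set 'I_d} :=
  match l, T with
  | 0, _ => [:: dt_modes T]
  | k.+1, DLeaf _ => [::]
  | k.+1, DNode tl tr => dt_level tl k ++ dt_level tr k
  end.
End DimTree.

Section Tensors.
Variable R : realType.
Variable d : nat.
Variable n : 'I_d -> nat.

Definition Idx := {dffun forall i : 'I_d, 'I_(n i)}.
(* tensors in R^{n_1 x ... x n_d}; R^o is R seen as a module over itself,
   so that tensors form an R-vector space *)
Definition Tensor := {ffun Idx -> R^o}.

Definition Rows (t : {set 'I_d}) := {dffun forall i : {i : 'I_d | i \in t}, 'I_(n (val i))}.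
Definition Cols (t : {set 'I_d}) := {dffun forall i : {i : 'I_d | i \notin t}, 'I_(n (val i))}.

Definition rowpart t (al : Idx) : Rows t := [ffun j => al (val j)].
Definition colpart t (al : Idx) : Cols t := [ffun j => al (val j)].

Definition combine t (a : Rows t) (b : Cols t) : Idx :=
  [ffun i => match boolP (i \in t) with
             | AltTrue h => a (exist _ i h)
             | AltFalse h => b (exist _ i h)
             end].

Definition matricize t (x : Tensor) : 'M[R]_(#|Rows t|, #|Cols t|) :=
  \matrix_(i, j) x (combine (enum_val i) (enum_val j)).

Definition tensorize t (M : 'M[R]_(#|Rows t|, #|Cols t|)) : Tensor :=
  [ffun al => M (enum_rank (rowpart t al)) (enum_rank (colpart t al))].

Definition apply_mode t (P : 'M[R]_(#|Rows t|)) (y : Tensor) : Tensor :=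
  tensorize (P *m matricize t y).

(* P is the orthogonal projection onto the span of the leading r left singular
   vectors of M, for some singular value decomposition M = U S V^T
   (U, V orthogonal, S rectangular diagonal with nonnegative nonincreasing
   diagonal entries). *)
Definition leading_left_proj p q (M : 'M[R]_(p, q)) (r : nat) (P : 'M[R]_p) : Prop :=
  exists (U : 'M[R]_p) (V : 'M[R]_q) (sv : nat -> R),
    [/\ U^T *m U = 1%:M, V^T *m V = 1%:M,
        (forall i, 0 <= sv i) /\ (forall i j, (i <= j)%N -> sv j <= sv i),
        M = U *m (\matrix_(i < p, j < q) (if (i : nat) == j then sv i else 0)) *m V^T
      & P = \sum_(i < p | (i < r)%N) col i U *m (col i U)^T].

(* The hierarchical (HOSVD-based) rank-r truncation:
   y = prod_{t in T^p} P_t ... prod_{t in T^1} P_t x, where every P_t is the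
   projection computed from the matricization x^{(t)} of the input x.
   Since the leading singular vectors need not be unique, this is a relation. *)
Definition apply_level (P : forall t : {set 'I_d}, 'M[R]_(#|Rows t|))
    (ts : seq {set 'I_d}) (y : Tensor) : Tensor :=
  foldl (fun z t => apply_mode (P t) z) y ts.

Definition is_truncation (T : dtree d) (r : {set 'I_d} -> nat) (x y : Tensor) : Prop :=
  exists P : forall t : {set 'I_d}, 'M[R]_(#|Rows t|),
    (forall l t, (1 <= l <= dt_depth T)%N -> t \in dt_level T l ->
        leading_left_proj (matricize t x) (r t) (P t)) /\
    y = foldl (fun z l => apply_level P (dt_level T l) z) x (iota 1 (dt_depth T)).

Variable s : nat.
Definition Block := {ffun 'I_s -> Tensor}.

Definition bnorm (v : Block) : R :=
  Num.sqrt (\sum_(j < s) \sum_(al : Idx) (v j al) ^+ 2).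

(* previous block index i-1 (only used for i >= 1) *)
Definition prev_ix (i : 'I_s) : 'I_s := insubd i i.-1.

(* L_{dt} v, with v = (v_0, ..., v_{s-1}) = (u^{k+s-1}, ..., u^k):
   (L v)_0 = sum_j (b_{s-1-j} dt G - a_{s-1-j} I) v_j ,  (L v)_i = v_{i-1}. *)
Definition Lop (a b : nat -> R) (G : Tensor -> Tensor) (dt : R) (v : Block) : Block :=
  [ffun i : 'I_s => if (i : nat) == 0%N then
        \sum_(j < s) ((b (s - j.+1)%N * dt) *: G (v j) - a (s - j.+1)%N *: v j)
      else v (prev_ix i)].

Definition opnorm_le (L : Block -> Block) (c : R) : Prop :=
  forall v, bnorm (L v) <= c * bnorm v.

Definition trunc_step (T : dtree d) (r : {set 'I_d} -> nat) (w v' : Block) : Prop :=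
  forall j : 'I_s, is_truncation T r (w j) (v' j).
End Tensors.

Arguments Lop {R d n} s a b G dt v.
Arguments bnorm {R d n s} v.
Arguments trunc_step {R d n s} T r w v'.
Arguments opnorm_le {R d n s} L c.
Arguments Block R {d} n s.
Arguments Tensor R {d} n.

(* Main.v *)
Require Import Defs.
From HB Require Import structures.
From mathcomp Require Import all_boot all_order all_algebra.
From mathcomp Require Import reals.
From mathcomp Require Import sequences exp.
Import Order.TTheory GRing.Theory Num.Theory.
Local Open Scope ring_scope.
Set Implicit Arguments. Unset Strict Implicit. Unset Printing Implicit Defensive.

Section Aux.
Variable R : realType.
Variable d : nat.
Variable n : 'I_d -> nat.

Definition tnorm2 (x : Tensor R n) : R := \sum_(al : Idx n) (x al : R) ^+ 2.
Definition fro p q (A : 'M[R]_(p, q)) : R := \sum_i \sum_j A i j ^+ 2.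

Lemma fro_tr p q (A : 'M[R]_(p, q)) : fro A = \tr (A^T *m A).
Proof.
rewrite /fro /mxtrace exchange_big /=; apply: eq_bigr => j _.
by rewrite !mxE; apply: eq_bigr => i _; rewrite !mxE expr2.
Qed.

Lemma fro_orth p q (U : 'M[R]_p) (X : 'M[R]_(p, q)) :
  U^T *m U = 1%:M -> fro (U *m X) = fro X.
Proof.
move=> hU; rewrite !fro_tr trmx_mul !mulmxA -(mulmxA X^T) hU mulmx1 //.
Qed.

Lemma fro_diag p q (dl : 'rV[R]_p) (X : 'M[R]_(p, q)) :
  (forall i, dl 0 i = 0 \/ dl 0 i = 1) -> fro (diag_mx dl *m X) <= fro X.
Proof.
move=> hd; rewrite /fro mul_diag_mx; apply: ler_sum => i _; apply: ler_sum => j _.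
rewrite mxE; case: (hd i) => ->; rewrite ?mul0r ?mul1r //.
by rewrite expr0n /= sqr_ge0.
Qed.

Lemma fro_proj p q q' (M : 'M[R]_(p, q)) (X : 'M[R]_(p, q')) (r : nat) (P : 'M[R]_p) :
  leading_left_proj M r P -> fro (P *m X) <= fro X.
Proof.
case=> U [V [sv [hU _ _ _ ->]]].
pose dl : 'rV[R]_p := \row_i (if (i < r)%N then 1 else 0).
have -> : \sum_(i < p | (i < r)%N) col i U *m (col i U)^T = U *m diag_mx dl *m U^T.
  apply/matrixP => a b; rewrite summxE !mxE.
  rewrite [RHS](bigID (fun i : 'I_p => (i < r)%N)) /= [X in _ = _ + X]big1 ?addr0; last first.
    by move=> i /negbTE hi; rewrite mul_mx_diag !mxE hi mulr0 mul0r.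
  apply: eq_bigr => i hi; rewrite mul_mx_diag !mxE big_ord1 !mxE hi mulr1 //.
have hUt : U^T^T *m U^T = 1%:M by rewrite trmxK; apply: mulmx1C.
rewrite -!mulmxA fro_orth //.
apply: le_trans (fro_diag _ _) _.
  by move=> i; rewrite mxE; case: ifP; [right|left].
by rewrite fro_orth.
Qed.
End Aux.
Lemma alt_T (P : bool) (A : Type) (f : P -> A) (g : ~~ P -> A) (hp : P) :
  match boolP P with AltTrue h => f h | AltFalse h => g h end = f hp.
Proof.
move: f g hp; case: P => f g hp //.
move: (boolP true) f g hp => e f g hp.
refine (match e as e0 in alt_spec _ _ c return (match e0 with AltTrue h => f h | AltFalse h => g h end = f hp) with AltTrue h => _ | AltFalse h => _ end).
  by rewrite (bool_irrelevance h hp).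
by [].
Qed.
Lemma alt_F (P : bool) (A : Type) (f : P -> A) (g : ~~ P -> A) (hp : ~~ P) :
  match boolP P with AltTrue h => f h | AltFalse h => g h end = g hp.
Proof.
move: f g hp; case: P => f g hp //.
move: (boolP false) f g hp => e f g hp.
refine (match e as e0 in alt_spec _ _ c return (match e0 with AltTrue h => f h | AltFalse h => g h end = g hp) with AltTrue h => _ | AltFalse h => _ end).
  by [].
by rewrite (bool_irrelevance h hp).
Qed.

Section Aux2.
Variable R : realType.
Variable d : nat.
Variable n : 'I_d -> nat.
Variable t : {set 'I_d}.

Lemma rowpart_combine (a : Rows n t) (b : Cols n t) : rowpart t (combine a b) = a.
Proof.
apply/ffunP => -[j hj]; rewrite !ffunE /=.
exact: (@alt_T (j \in t) ('I_(n j)) (fun h => a (exist _ j h)) (fun h => b (exist _ j h)) hj).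
Qed.

Lemma colpart_combine (a : Rows n t) (b : Cols n t) : colpart t (combine a b) = b.
Proof.
apply/ffunP => -[j hj]; rewrite !ffunE /=.
exact: (@alt_F (j \in t) ('I_(n j)) (fun h => a (exist _ j h)) (fun h => b (exist _ j h)) hj).
Qed.

Lemma combine_part (al : Idx n) : combine (rowpart t al) (colpart t al) = al.
Proof.
apply/ffunP => i; rewrite !ffunE.
case/orP: (orbN (i \in t)) => h.
  by rewrite (alt_T _ _ h) ffunE.
by rewrite (alt_F _ _ h) ffunE.
Qed.

Definition fsplit (al : Idx n) : 'I_#|Rows n t| * 'I_#|Cols n t| :=
  (enum_rank (rowpart t al), enum_rank (colpart t al)).
Definition fjoin (p : 'I_#|Rows n t| * 'I_#|Cols n t|) : Idx n :=
  combine (enum_val p.1) (enum_val p.2).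

Lemma fsplitK : cancel fsplit fjoin.
Proof. by move=> al; rewrite /fjoin /fsplit /= !enum_rankK combine_part. Qed.
Lemma fjoinK : cancel fjoin fsplit.
Proof.
by move=> [i j]; rewrite /fjoin /fsplit /= rowpart_combine colpart_combine !enum_valK.
Qed.

Lemma tnorm2_tensorize (M : 'M[R]_(#|Rows n t|, #|Cols n t|)) :
  tnorm2 (tensorize M) = fro M.
Proof.
rewrite /tnorm2 /fro pair_bigA /=.
rewrite (reindex fjoin); last by exists fsplit => x _; [apply: fjoinK|apply: fsplitK].
apply: eq_bigr => -[i j] _; rewrite ffunE.
have := fjoinK (i, j); rewrite /fsplit => -[-> ->] //.
Qed.

Lemma fro_matricize (y : Tensor R n) : fro (matricize t y) = tnorm2 y.
Proof.
rewrite /tnorm2 /fro pair_bigA /=.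
rewrite [RHS](reindex fjoin); last by exists fsplit => x _; [apply: fjoinK|apply: fsplitK].
by apply: eq_bigr => -[i j] _; rewrite mxE.
Qed.

Lemma tnorm2_apply_mode (P : 'M[R]_#|Rows n t|) q (M : 'M[R]_(#|Rows n t|, q)) rr (y : Tensor R n) :
  leading_left_proj M rr P -> tnorm2 (apply_mode P y) <= tnorm2 y.
Proof.
move=> hP; rewrite /apply_mode tnorm2_tensorize -fro_matricize.
exact: (fro_proj _ hP).
Qed.
End Aux2.

Section Aux3.
Variable R : realType.
Variable d : nat.
Variable n : 'I_d -> nat.

Lemma foldl_le (X : eqType) (Y : Type) (N : Y -> R) (f : Y -> X -> Y) (s : seq X) :
  (forall x, x \in s -> forall y, N (f y x) <= N y) -> forall y, N (foldl f y s) <= N y.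
Proof.
elim: s => [|x s IH] hs y //=.
apply: le_trans (IH _ _) (hs x _ y); first by move=> z hz; apply: hs; rewrite inE hz orbT.
by rewrite inE eqxx.
Qed.

Lemma trunc_le (T : dtree d) r (x y : Tensor R n) :
  is_truncation T r x y -> tnorm2 y <= tnorm2 x.
Proof.
case=> P [hP ->]; apply: foldl_le => l hl z.
rewrite mem_iota in hl.
apply: foldl_le => t ht z'.
apply: (tnorm2_apply_mode _ (hP l t _ ht)).
by move: hl; rewrite add1n ltnS.
Qed.

Lemma bnorm_trunc s (T : dtree d) r (w v' : Block R n s) :
  trunc_step T r w v' -> bnorm v' <= bnorm w.
Proof.
move=> h; rewrite /bnorm ler_sqrt; last by apply: sumr_ge0 => j _; apply: sumr_ge0 => al _; apply: sqr_ge0.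
by apply: ler_sum => j _; apply: (trunc_le (h j)).
Qed.
End Aux3.

Theorem theorem3p2 (R : realType) (d : nat) (n : 'I_d -> nat)
    (T : dtree d) (r : {set 'I_d} -> nat) (s : nat) (a b : nat -> R)
    (G : {linear Tensor R n -> Tensor R n}) (K dt0 : R) :
  dimension_tree T -> (0 < s)%N -> 0 < dt0 ->
  (forall dt, 0 < dt <= dt0 -> opnorm_le (Lop s a b G dt) (1 + K * dt)) ->
  forall Tf : R, 0 < Tf ->
  exists CT : R,
    forall dt, 0 < dt <= dt0 ->
    forall v : nat -> Block R n s,
      (forall k, trunc_step T r (Lop s a b G dt (v k)) (v k.+1)) ->
      forall k : nat, k%:R * dt <= Tf -> bnorm (v k) <= CT * bnorm (v 0%N).
Proof.
move=> _ _ _ hL Tf _; exists (expR (`|K| * Tf)) => dt hdt v hv k hk.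
have hdt0 : 0 <= dt by case/andP: hdt => /ltW.
have hc : 1 + K * dt <= 1 + `|K| * dt by rewrite lerD2l ler_wpM2r // ler_norm.
have c0 : 0 <= 1 + `|K| * dt by rewrite addr_ge0 // mulr_ge0.
have bn0 : forall w : Block R n s, 0 <= bnorm w by move=> w; apply: sqrtr_ge0.
have step : forall k, bnorm (v k.+1) <= (1 + `|K| * dt) * bnorm (v k).
  move=> j; apply: le_trans (bnorm_trunc (hv j)) _.
  apply: le_trans (hL _ hdt (v j)) _.
  by rewrite ler_wpM2r.
have iter : forall k, bnorm (v k) <= (1 + `|K| * dt) ^+ k * bnorm (v 0%N).
  elim=> [|j IH]; first by rewrite expr0 mul1r.
  apply: le_trans (step j) _.
  by rewrite exprS -mulrA ler_wpM2l.
apply: le_trans (iter k) _; rewrite ler_wpM2r //.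
apply: (@le_trans _ _ (expR (`|K| * dt) ^+ k)).
  apply: lerXn2r; rewrite ?inE ?c0 ?expR_ge0 ?expR_ge1Dx //.
  by rewrite qualifE /= expR_ge0.
rewrite -expRM_natl ler_expR mulrA (mulrC k%:R) -mulrA ler_wpM2l //.
Qed.
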